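(* Let $A\in\mathbb{R}^{n\times n}$ be Hurwitz, $B\in\mathbb{R}^{n\times 1}$, $C\in\mathbb{R}^{1\times n}$, and for $p_1>0$ define $$f(p_1)=2\,C(p_1I-A)^{-1}\big(p_1BB^T\big)(p_1I-A)^{-T}C^T .$$ Define $T_2=-C$, $T_4=A^{-1}$, $T_6=A^{-1}BB^TA^{-T}$, $T_3=T_6C^T$, $T_5=-(T_6T_4^T+T_4T_6^T)$. Suppose $\gamma\in\mathbb{R}$ and $S\in\mathbb{R}^{n\times n}$ satisfy the linear matrix inequalities $$S+S^T\succeq 0,\qquad L:=\begin{bmatrix}\gamma^2 & T_3^T-T_2S^T\\ T_3-ST_2^T & -ST_4^T-T_4S^T+T_5\end{bmatrix}\succeq 0 .$$ Then $\gamma^2\ge f(p_1)$ for all $p_1>0$. Consequently, an upper bound on $\sup_{p_1>0}f(p_1)$ is obtained by minimizing $\gamma^2$ over $(\gamma,S)$ subject to these LMIs.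
   Context: $A$ Hurwitz means all eigenvalues of $A$ have negative real part (so $A$ is invertible and $p_1I-A$ is invertible for $p_1>0$). $X\succeq 0$ means $X$ is symmetric positive semidefinite; $X^{-T}=(X^{-1})^T$. Interpretation: $f(p_1)$ equals the squared $\mathcal{H}_2$ norm of the first-order model $G_1(s)=b_1/(s+p_1)$ with $b_1=2p_1C(p_1I-A)^{-1}B$, i.e. the first-order model with pole $-p_1$ interpolating $G(s)=C(sI-A)^{-1}B$ at $s=p_1$. *)

(* Defs.v *)
From HB Require Import structures.
From mathcomp Require Import all_boot all_order all_algebra.
From mathcomp Require Import complex.
From mathcomp Require Import reals.
Set Implicit Arguments. Unset Strict Implicit. Unset Printing Implicit Defensive.
Import Order.TTheory GRing.Theory Num.Theory.
Local Open Scope ring_scope.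

Definition hurwitz (R : realType) (n : nat) (A : 'M[R]_n) : Prop :=
  forall z : R[i], eigenvalue (map_mx (fun x : R => (x%:C)%C) A) z -> complex.Re z < 0.

Definition psd (R : realType) (m : nat) (X : 'M[R]_m) : Prop :=
  X^T = X /\ forall x : 'cV[R]_m, 0 <= (x^T *m X *m x) 0 0.

Definition fH2 (R : realType) (n : nat) (A : 'M[R]_n) (B : 'cV[R]_n) (C : 'rV[R]_n)
    (p1 : R) : R :=
  2 * (C *m invmx (p1%:M - A) *m (p1 *: (B *m B^T)) *m (invmx (p1%:M - A))^T *m C^T) 0 0.

Section Ts.
Variables (R : realType) (n : nat) (A : 'M[R]_n) (B : 'cV[R]_n) (C : 'rV[R]_n).
Definition T2 : 'rV[R]_n := - C.
Definition T4 : 'M[R]_n := invmx A.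
Definition T6 : 'M[R]_n := invmx A *m (B *m B^T) *m (invmx A)^T.
Definition T3 : 'cV[R]_n := T6 *m C^T.
Definition T5 : 'M[R]_n := - (T6 *m T4^T + T4 *m T6^T).
Definition Lmat (gamma : R) (S : 'M[R]_n) : 'M[R]_(1 + n) :=
  block_mx (gamma ^+ 2)%:M (T3^T - T2 *m S^T)
           (T3 - S *m T2^T) (- (S *m T4^T) - T4 *m S^T + T5).
End Ts.

(* Main.v *)
Require Import Defs.
From HB Require Import structures.
From mathcomp Require Import all_boot all_order all_algebra.
From mathcomp Require Import complex reals.
From mathcomp Require Import ring lra.
Import Order.TTheory GRing.Theory Num.Theory.
Local Open Scope ring_scope.

Lemma hurwitz_unit (R : realType) (n : nat) (A : 'M[R]_n) (a : R) :
  hurwitz A -> 0 <= a -> (a%:M - A) \in unitmx.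
Proof.
move=> hA ha; rewrite unitmxE unitfE; apply/negP => /det0P [v vnz hv].
have H := hA (a%:C)%C.
suff : complex.Re (a%:C)%C < 0 by rewrite /= ltNge ha.
apply: H; apply/eigenvalueP; exists (map_mx (real_complex R) v); last first.
  by rewrite map_mx_eq0.
have e : v *m A = a *: v by move/eqP: hv; rewrite mulmxBr mul_mx_scalar subr_eq0 => /eqP.
rewrite -map_mxM e.
by apply/matrixP => i j; rewrite !mxE /= rmorphM.
Qed.

Lemma tr11 (R : realType) (u : 'M[R]_1) : u^T = u.
Proof. by apply/matrixP => i j; rewrite !ord1 mxE. Qed.

Lemma mainQ (R : realType) (n : nat) (A : 'M[R]_n) (B : 'cV[R]_n)
    (C : 'rV[R]_n) (gamma : R) (S : 'M[R]_n) (p : R) :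
  A \in unitmx -> (p%:M - A) \in unitmx -> 0 < p ->
  let Mi := invmx (p%:M - A) in
  let y := p *: (C *m A *m Mi) in
  let g := C *m Mi *m B in
  let v := col_mx (1%:M : 'M[R]_1) y^T in
  v^T *m Lmat A B C gamma S *m v =
    (gamma ^+ 2)%:M - (2 * p) *: (g *m g^T) - (2 / p) *: (y *m S *m y^T).
Proof.
move=> Au Mu p0 Mi y g v.
set Ai := invmx A.
have AMi : A *m Mi = Mi *m A.
  have h : (p%:M - A) *m A = A *m (p%:M - A).
    by rewrite mulmxBl mulmxBr mul_scalar_mx mul_mx_scalar.
  rewrite -[A *m Mi]mul1mx -(mulVmx Mu) -!mulmxA -/Mi; congr (_ *m _).
  by rewrite mulmxA h -mulmxA mulmxV // mulmx1.
have E0 : y *m Ai = p *: (C *m Mi).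
  rewrite /y -!scalemxAl; congr (_ *: _).
  by rewrite -(mulmxA C A Mi) AMi !mulmxA -(mulmxA _ A Ai) mulmxV // mulmx1.
have E1 : y *m Ai = C + p^-1 *: y.
  rewrite E0 /y scalerA mulVf ?gt_eqF // scale1r.
  rewrite -(mulmxA C A Mi) AMi mulmxA.
  have h : C *m Mi *m (p%:M - A) = C by rewrite -mulmxA mulVmx // mulmx1.
  move: h; rewrite mulmxBr mul_mx_scalar => h.
  by rewrite -[X in X + _]h subrK.
have E2 : y *m Ai *m B = p *: g.
  by rewrite E0 -scalemxAl.
rewrite /v /Lmat tr_col_mx trmxK tr_scalar_mx mul_row_block mul_row_col !mul1mx mulmx1.
rewrite /T3 /T2 /T5 /T6 /T4 -/Ai.
set T6 := Ai *m (B *m B^T) *m Ai^T.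
have T6s : T6^T = T6.
  by rewrite /T6 !trmx_mul !trmxK !mulmxA.
have H1 M : y *m M *m Ai^T *m y^T = y *m M *m C^T + p^-1 *: (y *m M *m y^T).
  by rewrite -mulmxA -trmx_mul E1 linearD linearZ /= mulmxDr scalemxAr.
have H2 M : y *m (Ai *m M^T) *m y^T = y *m M *m Ai^T *m y^T.
  by rewrite -[LHS]tr11 !trmx_mul !trmxK !mulmxA.
have H3 : y *m T6 *m y^T = (p ^+ 2) *: (g *m g^T).
  have -> : y *m T6 *m y^T = (y *m Ai *m B) *m (y *m Ai *m B)^T.
    by rewrite /T6 !trmx_mul ?trmxK !mulmxA.
  by rewrite E2 linearZ /= -scalemxAl -scalemxAr scalerA expr2.
clearbody T6 g.
set X1 := y *m T6 *m C^T.
set X2 := y *m S *m C^T.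
set X3 := y *m S *m y^T.
set X4 := g *m g^T.
have Pa : y *m (T6 *m C^T - S *m (- C)^T) = X1 + X2.
  by rewrite linearN /= mulmxN opprK mulmxDr !mulmxA.
have Pb : ((T6 *m C^T)^T - - C *m S^T) *m y^T = X1 + X2.
  rewrite -Pa -[RHS]tr11 !mulmxBr !raddfB /= !trmx_mul !trmxK T6s.
  by rewrite mulmxBl.
have pp : p^-1 * p^+2 = p by rewrite expr2 mulrA mulVf ?gt_eqF // mul1r.
rewrite Pa mulmxDl Pb.
rewrite !(mulmxDr, mulmxDl, mulmxN, mulNmx) !H2 (mulmxA y S) (mulmxA y T6) !H1 H3 scalerA pp -/X1 -/X2 -/X3 -/X4.
clear Pa Pb H3; clearbody X1 X2 X3 X4.
apply/matrixP => i j; rewrite !mxE; ring.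
Qed.


Theorem proposition1 (R : realType) (n : nat) (A : 'M[R]_n) (B : 'cV[R]_n)
    (C : 'rV[R]_n) (gamma : R) (S : 'M[R]_n) :
  hurwitz A ->
  psd (S + S^T) ->
  psd (Lmat A B C gamma S) ->
  forall p1 : R, 0 < p1 -> fH2 A B C p1 <= gamma ^+ 2.
Proof.
move=> hA [_ hS] [_ hL] p p0.
have Au : A \in unitmx.
  have h := @hurwitz_unit _ _ A 0 hA (lexx 0).
  rewrite raddf0 sub0r -scaleN1r unitmxE detZ unitrM in h.
  by rewrite unitmxE; case/andP: h.
have Mu := @hurwitz_unit _ _ A p hA (ltW p0).
have Q := @mainQ _ _ A B C gamma S p Au Mu p0; simpl in Q.
set Mi := invmx (p%:M - A) in Q.
set y := p *: (C *m A *m Mi) in Q.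
set g := C *m Mi *m B in Q.
have L0 := hL (col_mx 1%:M y^T).
rewrite Q in L0.
have s0 := hS y^T.
rewrite trmxK mulmxDr mulmxDl -[y *m S^T *m y^T]tr11 !trmx_mul !trmxK mxE !mulmxA in s0.
have F : fH2 A B C p = 2 * p * (g *m g^T) 0 0.
  rewrite /fH2 -/Mi.
  have -> : C *m Mi *m (p *: (B *m B^T)) *m Mi^T *m C^T = p *: (g *m g^T).
    by rewrite /g !trmx_mul -scalemxAr -!scalemxAl !mulmxA.
  by rewrite mxE mulrA.
rewrite F.
move: L0 s0; set G := g *m g^T; set Y := y *m S *m y^T; clearbody G Y.
rewrite !mxE eqxx mulr1n.
move: (G 0 0) (Y 0 0) => a b L0 s0.
have Y0 : 0 <= b by rewrite -(pmulrn_lge0 _ (isT : (0 < 2)%N)) mulr2n.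
have : 0 <= 2 / p * b by apply: mulr_ge0 => //; apply: divr_ge0 => //; apply: ltW.
clear -L0; move: L0; move: (2 / p * b) => c L0 H.
lra.
Qed.
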